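(* Let $p$ be an odd prime, $a_1,a_2,a_3\in\mathbb{F}_p$, $s = 3+a_1+a_2+a_3$, and let $x=(x_1,x_2,x_3)\in\mathbb{F}_p^3$, $x\neq(0,0,0)$, be a solution of \[ x_1^2+x_2^2+x_3^2+a_1x_2x_3+a_2x_1x_3+a_3x_1x_2 = s\,x_1x_2x_3 \] with $x_i = 0$ for some index $i$ (indices modulo $3$). Then $x_{i-1}\neq 0$; put $r_i := x_{i+1}/x_{i-1}$, which satisfies $r_i^2+a_ir_i+1=0$. Let $m_k$ ($k=1,2,3$) be the map replacing $x_k$ by $-x_k + s x_{k-1}x_{k+1} - a_{k+1}x_{k-1} - a_{k-1}x_{k+1}$ and leaving the other coordinates unchanged, let $\rho = m_{i+1}\circ m_{i-1}$, and let $N$ be the order of $\rho$ as a permutation of the set of nonzero solutions with $i$-th coordinate $0$ (equivalently, the multiplicative order of $r_i^2$). Then the following are equivalent: (1) $a_i^2=4$; (2) $r_i^2=1$; (3) $N=1$; (4) $r_i = -a_i/2$; (5) $r_i^{-1} = -a_i/2$; (6) $x_{i-1} + \frac{a_i}{2}x_{i+1} = 0$; (7) $x_{i-1}^2 = x_{i+1}^2$; (8) $m_{i-1}x = x$; (9) $m_{i+1}x = x$.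
   Context: On solutions with $x_i=0$ the moves $m_{i\pm1}$ preserve the condition $x_i = 0$; $\rho$ multiplies the points of each of the two lines $x_{i+1}=r x_{i-1}$ (with $r$ a root of $r^2+a_ir+1=0$) by $r^{\pm 2}$. *)

(* Defs.v *)
From mathcomp Require Import all_boot all_order all_algebra.
Set Implicit Arguments. Unset Strict Implicit. Unset Printing Implicit Defensive.
Import GRing.Theory.
Local Open Scope ring_scope.

(* Indices 1,2,3 of the paper are represented by 'I_3 = {0,1,2};
   indices are taken modulo 3: k+1 is [ordS k], k-1 is [ord_pred k]. *)
Notation nxt k := (ordS k).
Notation prv k := (ord_pred k).

Definition pt (p : nat) := {ffun 'I_3 -> 'F_p}.

Section Markov.
Variables (p : nat) (a : 'I_3 -> 'F_p).

Definition sval : 'F_p := 3%:R + \sum_(k < 3) a k.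

Definition is_sol (x : pt p) : bool :=
  \sum_(k < 3) x k ^+ 2 + \sum_(k < 3) a k * x (prv k) * x (nxt k)
  == sval * \prod_(k < 3) x k.

Definition move (k : 'I_3) (x : pt p) : pt p :=
  [ffun j => if j == k then
      - x k + sval * x (prv k) * x (nxt k) - a (nxt k) * x (prv k)
      - a (prv k) * x (nxt k)
    else x j].

Definition rho (i : 'I_3) (x : pt p) : pt p := move (nxt i) (move (prv i) x).

Definition zero_sols (i : 'I_3) : {set pt p} :=
  [set y : pt p | [&& is_sol y, y != 0 & y i == 0]].

(* the order of rho as a permutation of [zero_sols i]: the lcm of the
   lengths of its cycles (the orbit size of y under rho) *)
Definition rho_order (i : 'I_3) : nat :=
  \big[lcmn/1%N]_(y in zero_sols i) fingraph.order (rho i) y.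

End Markov.

(* Main.v *)
Require Import Defs.
From mathcomp Require Import all_boot all_order all_algebra.
From mathcomp Require Import ring.
Import GRing.Theory.
Local Open Scope ring_scope.

Lemma ordF1 (i : 'I_3) : prv (prv i) = nxt i.
Proof. by apply/val_inj; case: i => [[|[|[|?]]] ?]. Qed.
Lemma ordF2 (i : 'I_3) : nxt (nxt i) = prv i.
Proof. by apply/val_inj; case: i => [[|[|[|?]]] ?]. Qed.
Lemma ordF3 (i : 'I_3) : prv (nxt i) = i.
Proof. by apply/val_inj; case: i => [[|[|[|?]]] ?]. Qed.
Lemma ordF4 (i : 'I_3) : nxt (prv i) = i.
Proof. by apply/val_inj; case: i => [[|[|[|?]]] ?]. Qed.
Lemma ordD1 (i : 'I_3) : (nxt i != i) && (prv i != i) && (prv i != nxt i).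
Proof. by case: i => [[|[|[|?]]] ?]. Qed.
Lemma ordD2 (i k : 'I_3) : k != i -> k != nxt i -> k == prv i.
Proof. by case: i => [[|[|[|?]]] ?]; case: k => [[|[|[|?]]] ?]. Qed.

Lemma sum_rot (R : nmodType) (F : 'I_3 -> R) i :
  \sum_(k < 3) F k = F i + F (nxt i) + F (prv i).
Proof.
have /andP[/andP[d1 d2] d3] := ordD1 i.
rewrite (bigD1 i) //= (bigD1 (nxt i)) //= (bigD1 (prv i)) /=; last by rewrite d2 d3.
rewrite big1 ?addr0 ?addrA // => k; rewrite -!andbA => /and3P[k1 k2 k3].
by rewrite (ordD2 _ _ k1 k2) in k3.
Qed.

Section S.
Variables (p : nat) (a : 'I_3 -> 'F_p).

Lemma move_other k j (x : pt p) : j != k -> move a k x j = x j.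
Proof. by rewrite /move ffunE => /negbTE ->. Qed.

Lemma move_prv_val (x : pt p) i : x i = 0 ->
  move a (prv i) x (prv i) = - x (prv i) - a i * x (nxt i).
Proof. by move=> xi; rewrite /move ffunE eqxx ordF1 ordF4 xi; ring. Qed.

Lemma move_nxt_val (x : pt p) i : x i = 0 ->
  move a (nxt i) x (nxt i) = - x (nxt i) - a i * x (prv i).
Proof. by move=> xi; rewrite /move ffunE eqxx ordF2 ordF3 xi; ring. Qed.

Lemma move_fix (x : pt p) k : move a k x = x <-> move a k x k = x k.
Proof.
split=> [->//|H]; apply/ffunP=> j.
by case: (eqVneq j k) => [->//|jk]; rewrite move_other.
Qed.

Lemma sol_eq (x : pt p) i : is_sol a x -> x i = 0 ->
  x (prv i) ^+ 2 + x (nxt i) ^+ 2 + a i * x (prv i) * x (nxt i) = 0.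
Proof.
move=> /eqP H xi; move: H.
rewrite !(sum_rot _ _ i) (bigD1 i) //= xi mul0r ordF1 ordF2 ordF3 ordF4 xi !mulr0 => <-.
ring.
Qed.

Lemma quad (c w z : 'F_p) : z != 0 -> w ^+ 2 + z ^+ 2 + c * w * z = 0 ->
  (c ^+ 2 = 4%:R <-> 2%:R * w + c * z = 0).
Proof.
move=> z0 E.
have id : (2%:R * w + c * z) ^+ 2 = (c ^+ 2 - 4%:R) * z ^+ 2.
  transitivity (4%:R * (w ^+ 2 + z ^+ 2 + c * w * z) + (c ^+ 2 - 4%:R) * z ^+ 2).
    by ring.
  by rewrite E mulr0 add0r.
split=> H.
  by move: id; rewrite H subrr mul0r => /eqP; rewrite expf_eq0 /= => /eqP.
move: id; rewrite H expr0n /= => /esym/eqP.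
by rewrite mulf_eq0 expf_eq0 (negbTE z0) orbF subr_eq0 => /eqP.
Qed.

Lemma core (x : pt p) i : is_sol a x -> x != 0 -> x i = 0 ->
  [/\ x (prv i) != 0, x (nxt i) != 0,
      (a i ^+ 2 = 4%:R <-> 2%:R * x (prv i) + a i * x (nxt i) = 0) &
      (a i ^+ 2 = 4%:R <-> 2%:R * x (nxt i) + a i * x (prv i) = 0)].
Proof.
move=> sx x0 xi; have E := sol_eq x i sx xi.
have zz : x (prv i) = 0 -> x (nxt i) = 0 -> False.
  move=> u0 v0; move/eqP: x0; apply; apply/ffunP => j; rewrite ffunE.
  case: (eqVneq j i) => [->//|ji]; case: (eqVneq j (nxt i)) => [->//|jn].
  by rewrite (eqP (ordD2 _ _ ji jn)).
have u0 : x (prv i) != 0.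
  apply/eqP => u0; apply: zz => //.
  have : x (nxt i) ^+ 2 = 0 by rewrite -E u0; ring.
  by move/eqP; rewrite expf_eq0 /= => /eqP.
have v0 : x (nxt i) != 0.
  apply/eqP => v0; apply: zz => //.
  have : x (prv i) ^+ 2 = 0 by rewrite -E v0; ring.
  by move/eqP; rewrite expf_eq0 /= => /eqP.
split => //; apply: quad => //.
by rewrite -E; ring.
Qed.

Lemma move_prv_fix (x : pt p) i : x i = 0 ->
  (move a (prv i) x = x <-> 2%:R * x (prv i) + a i * x (nxt i) = 0).
Proof.
move=> xi; rewrite move_fix move_prv_val //; split=> H.
  have -> : 2%:R * x (prv i) + a i * x (nxt i) =
    x (prv i) - (- x (prv i) - a i * x (nxt i)) by ring.
  by rewrite H subrr.
have -> : - x (prv i) - a i * x (nxt i) =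
    x (prv i) - (2%:R * x (prv i) + a i * x (nxt i)) by ring.
by rewrite H subr0.
Qed.

Lemma move_nxt_fix (x : pt p) i : x i = 0 ->
  (move a (nxt i) x = x <-> 2%:R * x (nxt i) + a i * x (prv i) = 0).
Proof.
move=> xi; rewrite move_fix move_nxt_val //; split=> H.
  have -> : 2%:R * x (nxt i) + a i * x (prv i) =
    x (nxt i) - (- x (nxt i) - a i * x (prv i)) by ring.
  by rewrite H subrr.
have -> : - x (nxt i) - a i * x (prv i) =
    x (nxt i) - (2%:R * x (nxt i) + a i * x (prv i)) by ring.
by rewrite H subr0.
Qed.


Lemma rhoN (x : pt p) i : is_sol a x -> x != 0 -> x i = 0 ->
  (a i ^+ 2 = 4%:R <-> rho_order a i = 1%N).
Proof.
move=> sx x0 xi.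
split=> H.
  rewrite /rho_order big1 // => y; rewrite inE => /and3P[sy y0 /eqP yi].
  have [_ _ F1 F2] := core y i sy y0 yi.
  have m1 : move a (prv i) y = y by apply/move_prv_fix => //; apply/F1.
  have m2 : move a (nxt i) y = y by apply/move_nxt_fix => //; apply/F2.
  have ry : rho a i y = y by rewrite /rho m1 m2.
  apply/eqP; rewrite eqn_leq order_gt0 andbT.
  apply: (@order_le_cycle _ (rho a i) [:: y]); last by rewrite inE.
  by rewrite /= ry eqxx.
have [_ _ F1 _] := core x i sx x0 xi.
have : (fingraph.order (rho a i) x %| 1)%N.
  rewrite -[X in (_ %| X)%N]H; apply: (biglcmn_sup x) => //.
  by rewrite inE sx x0 xi eqxx.
rewrite dvdn1 => /eqP o1.
have : (#|fconnect (rho a i) x| <= 1)%N by rewrite -/(fingraph.order _ _) o1.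
move/card_le1_eqP => eq1.
have rx : rho a i x = x.
  have c1 : x \in fconnect (rho a i) x := connect0 _ x.
  have c2 : rho a i x \in fconnect (rho a i) x := fconnect1 _ x.
  by symmetry; apply: eq1.
apply: (proj2 F1); apply: (proj1 (move_prv_fix x i xi)).
apply/move_fix; move: rx => /(congr1 (fun f : pt p => f (prv i))).
rewrite /rho move_other //.
by have /andP[/andP[_ _] ] := ordD1 i.
Qed.
End S.

Theorem lemma2p1 (p : nat) (hp : prime p) (hodd : odd p)
  (a : 'I_3 -> 'F_p) (x : pt p) (i : 'I_3) :
  is_sol a x -> x != 0 -> x i = 0 ->
  let r := x (nxt i) / x (prv i) in
  let N := rho_order a i in
  x (prv i) != 0 /\ r ^+ 2 + a i * r + 1 = 0 /\
  ((a i ^+ 2 = 4%:R <-> r ^+ 2 = 1) /\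
   (a i ^+ 2 = 4%:R <-> N = 1%N) /\
   (a i ^+ 2 = 4%:R <-> r = - (a i / 2%:R)) /\
   (a i ^+ 2 = 4%:R <-> r^-1 = - (a i / 2%:R)) /\
   (a i ^+ 2 = 4%:R <-> x (prv i) + a i / 2%:R * x (nxt i) = 0) /\
   (a i ^+ 2 = 4%:R <-> x (prv i) ^+ 2 = x (nxt i) ^+ 2) /\
   (a i ^+ 2 = 4%:R <-> move a (prv i) x = x) /\
   (a i ^+ 2 = 4%:R <-> move a (nxt i) x = x)).
Proof.
move=> sx x0 xi r N.
have [u0 v0 E1 E2] := core p a x i sx x0 xi.
have E := sol_eq p a x i sx xi.
have NN := rhoN p a x i sx x0 xi.
have M1 := move_prv_fix p a x i xi.
have M2 := move_nxt_fix p a x i xi.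
have two0 : (2%:R : 'F_p) != 0.
  have p2 : (2 < p)%N.
    by move: (prime_gt1 hp) hodd; case: (p) => [|[|[|q]]].
  apply/eqP => /(congr1 (@nat_of_ord _)); rewrite val_Fp_nat // modn_small //.
have four0 : (4%:R : 'F_p) != 0.
  by rewrite (_ : 4%:R = 2%:R * 2%:R) ?mulf_neq0 // -natrM.
rewrite /N {N}; move: E1 E2 E M1 M2 NN u0 v0; rewrite /r {r}.
move: (x (prv i)) (x (nxt i)) (a i) => u v c E1 E2 E M1 M2 NN u0 v0.
have h7 : c ^+ 2 = 4%:R <-> u ^+ 2 = v ^+ 2.
  split=> H.
    have H2 := proj1 E1 H.
    have : 4%:R * (u ^+ 2 - v ^+ 2) = 0.
      transitivity ((2%:R * u + c * v) * (2%:R * u - c * v) + (c ^+ 2 - 4%:R) * v ^+ 2).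
        by ring.
      by rewrite H2 H subrr; ring.
    by move/eqP; rewrite mulf_eq0 (negbTE four0) /= subr_eq0 => /eqP.
  apply/E1; have : u * (2%:R * u + c * v) = 0.
    transitivity (u ^+ 2 + v ^+ 2 + c * u * v + (u ^+ 2 - v ^+ 2)).
      by ring.
    by rewrite E H subrr add0r.
  by move/eqP; rewrite mulf_eq0 (negbTE u0) /= => /eqP.
split=> //; split.
  have -> : (v / u) ^+ 2 + c * (v / u) + 1 = (u ^+ 2 + v ^+ 2 + c * u * v) / u ^+ 2.
    by field; rewrite ?two0 ?u0 ?v0.
  by rewrite E mul0r.
split.
  apply: (iff_trans h7); rewrite expr_div_n; split=> H.
    by rewrite -H divff // expf_neq0.
  move/(congr1 (fun t => t * u ^+ 2)): H; rewrite divfK ?expf_neq0 // mul1r => ->.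
  done.
split; first exact: NN.
split.
  apply: (iff_trans E2); split=> H.
    have -> : v / u = (2%:R * v + c * u) / (2%:R * u) - c / 2%:R by field; rewrite ?two0 ?u0 ?v0.
    by rewrite H mul0r sub0r.
  have -> : 2%:R * v + c * u = 2%:R * u * (v / u + c / 2%:R) by field; rewrite ?two0 ?u0 ?v0.
  by rewrite H addNr mulr0.
split.
  rewrite invf_div; apply: (iff_trans E1); split=> H.
    have -> : u / v = (2%:R * u + c * v) / (2%:R * v) - c / 2%:R by field; rewrite ?two0 ?u0 ?v0.
    by rewrite H mul0r sub0r.
  have -> : 2%:R * u + c * v = 2%:R * v * (u / v + c / 2%:R) by field; rewrite ?two0 ?u0 ?v0.
  by rewrite H addNr mulr0.
split.
  apply: (iff_trans E1); split=> H.
    have -> : u + c / 2%:R * v = (2%:R * u + c * v) / 2%:R by field; rewrite ?two0 ?u0 ?v0.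
    by rewrite H mul0r.
  have -> : 2%:R * u + c * v = 2%:R * (u + c / 2%:R * v) by field; rewrite ?two0 ?u0 ?v0.
  by rewrite H mulr0.
split; first exact: h7.
split.
  exact: (iff_trans E1 (iff_sym M1)).
exact: (iff_trans E2 (iff_sym M2)).
Qed.
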